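(* In the setting below, for every $a\in A$ the map $f_a:X\to T_a$ is roughly Lipschitz: there are constants $\Lambda>0$, $\sigma\ge0$ such that $|f_a(x)f_a(x')|\le\Lambda|xx'|+\sigma$ for all $x,x'\in X$.
   Context: Setting: $Z$ is a bounded metric space with $\operatorname{diam}Z>0$, $\mu=\pi/\operatorname{diam}Z$, $A$ a set with $|A|=n+1$, and $\delta,\gamma\in(0,1)$, $\lambda\ge1$, $r\in(0,1)$ sufficiently small with $\lambda r<\delta$, $r<\operatorname{diam}Z$. $(\mathcal U_j)_{j\in\mathbb N}$ is a $\gamma$-separated characteristic sequence of open coverings of $Z$, each colored by $A$, $\mathcal U_j=\bigcup_{a\in A}\mathcal U_j^a$, with parameter $r$ and characteristic constants $\delta,\lambda$; that is: each $\mathcal U_j^a$ consists of pairwise disjoint open sets; (1) $\sup_{U\in\mathcal U_j}\operatorname{diam}U\le r^j$ and every ball of radius $\delta r^j$ in $Z$ is contained in some member of $\mathcal U_j$; (2) for every $a,j$ and $z\in Z$ there is $U\in\mathcal U_j^a$ with $\operatorname{dist}(z,U)\le\lambda r^j$; (3) for every $a$ and distinct $U\in\mathcal U_j^a$, $U'\in\mathcal U_{j'}^a$ with $j'\le j$, either $B_s(U)\cap U'=\emptyset$ or $B_s(U)\subset U'$, and if $j'<j$ there is $U''\in\mathcal U_j^a$ with $B_s(U'')\subset U'$, where $s=\gamma r^j$ and $B_s(U)=\{z:\operatorname{dist}(z,U)<s\}$. Trees: put $\mathcal U_0^a=\{Z\}$. $T_a$ is the tree (edges of length $1$, path metric) with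 vertex set $V^a=\bigsqcup_{j\ge0}V_j^a$, where $V_j^a$ is in bijection with $\mathcal U_j^a$ (root $v_a$ corresponds to $Z$); $v\in V_j^a$, $v'\in V_{j'}^a$, $j'<j$, are joined by an edge iff the corresponding sets satisfy $U\subset U'$ and $j'$ is the maximal level $<j$ for which some member of $\mathcal U_{j'}^a$ contains $U$. Cone: $\operatorname{Co}(Z)=Z\times[0,\infty)/Z\times\{0\}$ with vertex $o$ and metric $|xx'|$ for $x=(z,t),x'=(z',t')$ equal to the length of the side $\bar x\bar x'$ of a triangle in $\mathrm H^2$ with sides $t,t'$ from $\bar o$ enclosing angle $\mu|zz'|$. Let $R=\ln(1/r)$, $Z_j=\{(z,jR):z\in Z\}$ for $j\ge1$, $Z_0=\{o\}$, $X=\bigcup_{j\ge0}Z_j$. Define $f_a:X\to T_a$ by $f_a(o)=v_a$ and, for $x=(z,jR)$, $j\ge1$, $f_a(x)$ is the vertex of $V_j^a$ corresponding to a (fixed choice of) member $U\in\mathcal U_j^a$ closest to $z$, i.e. minimizing $\operatorname{dist}(z,U)$. *)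

(* Defs.v *)
From Stdlib Require Import Reals Lra List.
Open Scope R_scope.

Section Setting.
Variables (Z : Type) (d : Z -> Z -> R).

Definition is_metric : Prop :=
  (forall x y, d x y = 0 <-> x = y) /\
  (forall x y, d x y = d y x) /\
  (forall x y w, d x w <= d x y + d y w).

Definition bounded_metric : Prop := exists M, forall x y, d x y <= M.

Definition is_diam (D : R) : Prop := is_lub (fun t => exists x y, t = d x y) D.

Definition same_set (U V : Z -> Prop) : Prop := forall z, U z <-> V z.
Definition subset (U V : Z -> Prop) : Prop := forall z, U z -> V z.
Definition ball (z : Z) (e : R) : Z -> Prop := fun y => d z y < e.
Definition is_open (U : Z -> Prop) : Prop :=
  forall z, U z -> exists e, 0 < e /\ subset (ball z e) U.

Definition nbhd (s : R) (U : Z -> Prop) : Z -> Prop :=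
  fun z => exists u, U u /\ d z u < s.

(* dist(z,U) <= c, with dist(z,U) = inf_{u in U} d z u (inf of empty set = +oo) *)
Definition dist_le (z : Z) (U : Z -> Prop) (c : R) : Prop :=
  forall e, 0 < e -> exists u, U u /\ d z u < c + e.

Definition dist_le_dist (z : Z) (U V : Z -> Prop) : Prop :=
  forall v, V v -> forall e, 0 < e -> exists u, U u /\ d z u < d z v + e.

Definition diam_le (U : Z -> Prop) (c : R) : Prop :=
  forall u v, U u -> U v -> d u v <= c.

Variables (A : Type).

(* cov a j : the family U_j^a (meaningful for j >= 1) *)
Definition colored_cover_family (cov : A -> nat -> (Z -> Prop) -> Prop) : Prop :=
  forall a j, (1 <= j)%nat ->
    (forall U, cov a j U -> is_open U) /\
    (forall U V, cov a j U -> cov a j V -> (exists z, U z /\ V z) -> same_set U V).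

Definition characteristic_sequence (cov : A -> nat -> (Z -> Prop) -> Prop)
  (r delta lam gamma : R) : Prop :=
  colored_cover_family cov /\
  (forall j a U, (1 <= j)%nat -> cov a j U -> diam_le U (r ^ j)) /\
  (forall j z, (1 <= j)%nat ->
     exists a U, cov a j U /\ subset (ball z (delta * r ^ j)) U) /\
  (forall a j z, (1 <= j)%nat ->
     exists U, cov a j U /\ dist_le z U (lam * r ^ j)) /\
  (forall a j j' U U', (1 <= j')%nat -> (j' <= j)%nat ->
     cov a j U -> cov a j' U' -> ~ same_set U U' ->
     (forall z, ~ (nbhd (gamma * r ^ j) U z /\ U' z)) \/
     subset (nbhd (gamma * r ^ j) U) U') /\
  (forall a j j' U', (1 <= j')%nat -> (j' < j)%nat -> cov a j' U' ->
     exists U'', cov a j U'' /\ subset (nbhd (gamma * r ^ j) U'') U').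

Definition fam (cov : A -> nat -> (Z -> Prop) -> Prop) (a : A) (j : nat)
  (U : Z -> Prop) : Prop :=
  match j with
  | O => forall z, U z
  | S _ => cov a j U
  end.

(* vertices of T_a: a level j together with a member of U_j^a *)
Definition vertex : Type := (nat * (Z -> Prop))%type.

Definition same_vertex (v w : vertex) : Prop :=
  fst v = fst w /\ same_set (snd v) (snd w).

Definition child (cov : A -> nat -> (Z -> Prop) -> Prop) (a : A) (v w : vertex) : Prop :=
  let (j, U) := v in let (j', U') := w in
  (j' < j)%nat /\ fam cov a j U /\ fam cov a j' U' /\ subset U U' /\
  (forall k, (j' < k)%nat -> (k < j)%nat ->
     ~ exists W, fam cov a k W /\ subset U W).

Definition adj cov a (v w : vertex) : Prop := child cov a v w \/ child cov a w v.

Inductive tree_walk cov a : vertex -> vertex -> nat -> Prop :=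
| tw0 : forall v w, same_vertex v w -> tree_walk cov a v w 0
| twS : forall v u w n, adj cov a v u -> tree_walk cov a u w n ->
          tree_walk cov a v w (S n).

End Setting.

Definition acosh (y : R) : R := ln (y + sqrt (y * y - 1)).

(* distance in Co(Z) between (z,t) and (z',t'): third side of a hyperbolic
   triangle with sides t,t' enclosing angle mu*|zz'| (hyperbolic law of cosines) *)
Definition cone_dist {Z : Type} (d : Z -> Z -> R) (mu : R)
  (z : Z) (t : R) (z' : Z) (t' : R) : R :=
  acosh (cosh t * cosh t' - sinh t * sinh t' * cos (mu * d z z')).

(* the point of X encoded by (z,j): (z, jR) for j >= 1, and o for j = 0 *)
Definition X_dist {Z : Type} (d : Z -> Z -> R) (D r : R) (z : Z) (j : nat)
  (z' : Z) (j' : nat) : R :=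
  cone_dist d (PI / D) z (INR j * ln (1 / r)) z' (INR j' * ln (1 / r)).

Definition f_vertex {Z A : Type} (choice : A -> nat -> Z -> (Z -> Prop))
  (a : A) (z : Z) (j : nat) : vertex Z :=
  match j with
  | O => (O, fun _ => True)
  | S _ => (j, choice a j z)
  end.

(* Main.v *)
Require Import Defs.
From Stdlib Require Import Reals List Lra Lia Arith Classical ClassicalEpsilon.
Open Scope R_scope.

Lemma ln_le' : forall x y, 0 < x -> x <= y -> ln x <= ln y.
Proof. intros x y Hx Hxy. destruct (Rle_lt_or_eq_dec _ _ Hxy) as [H|H].
  - left; apply ln_increasing; lra.
  - subst; lra. Qed.

Lemma acosh_ge_ln : forall y, 1 <= y -> ln y <= acosh y.
Proof. intros y Hy. unfold acosh. apply ln_le'. lra.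
  pose proof (sqrt_pos (y*y-1)). lra. Qed.

Lemma sin_lb_eq x : sin_lb x = x - x^3/6 + x^5/120 - x^7/5040.
Proof. unfold sin_lb, sin_approx, sin_term. simpl sum_f_R0.
replace (INR (Factorial.fact (2*0+1))) with 1 by (simpl; lra).
replace (INR (Factorial.fact (2*1+1))) with 6 by (simpl; lra).
replace (INR (Factorial.fact (2*2+1))) with 120 by (simpl; lra).
replace (INR (Factorial.fact (2*3+1))) with 5040 by (rewrite INR_IZR_INZ; simpl; lra).
simpl. field. Qed.

Lemma one_minus_cos th : 0 <= th -> th <= PI -> th * th / 18 <= 1 - cos th.
Proof. intros H0 H1. pose proof PI_4 as HP.
  set (x := th / 2).
  assert (Hx0 : 0 <= x) by (unfold x; lra).
  assert (Hx1 : x <= PI) by (unfold x; lra).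
  assert (Hx2 : x <= 2) by (unfold x; lra).
  destruct (SIN x Hx0 Hx1) as [Hs _]. rewrite sin_lb_eq in Hs.
  assert (Hlb : x / 3 <= x - x^3/6 + x^5/120 - x^7/5040).
  { assert (Hy : 0 <= x*x <= 4) by nra.
    assert (E: x - x^3/6 + x^5/120 - x^7/5040 - x/3 =
       x * ((2/3 - (x*x)/6) + (x*x)*(x*x)*(1/120 - (x*x)/5040))) by field.
    assert (0 <= (2/3 - (x*x)/6) + (x*x)*(x*x)*(1/120 - (x*x)/5040)).
    { assert (0 <= (x*x)*(x*x)) by nra. assert (0 <= 1/120 - (x*x)/5040) by lra.
      assert (0 <= (x*x)*(x*x)*(1/120 - (x*x)/5040)) by nra. lra. }
    assert (0 <= x * ((2/3 - (x*x)/6) + (x*x)*(x*x)*(1/120 - (x*x)/5040))) by nra.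
    lra. }
  assert (Hc : cos th = 1 - 2 * sin x * sin x).
  { replace th with (2 * x) by (unfold x; field). apply cos_2a_sin. }
  rewrite Hc. assert (x/3 <= sin x) by lra.
  replace th with (2*x) by (unfold x; field). nra. Qed.

Lemma cosh_sinh_decomp t t' c :
  cosh t * cosh t' - sinh t * sinh t' * c =
  (exp t / exp t' + exp t' / exp t) / 2 + sinh t * sinh t' * (1 - c).
Proof. unfold cosh, sinh. rewrite !exp_Ropp.
  pose proof (exp_pos t). pose proof (exp_pos t'). field; lra. Qed.

Lemma sinh_nonneg t : 0 <= t -> 0 <= sinh t.
Proof. intro H. unfold sinh. destruct (Rle_lt_or_eq_dec _ _ H) as [H'|H'].
  - pose proof (exp_increasing (-t) t ltac:(lra)). lra.
  - subst. rewrite Ropp_0. lra. Qed.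

Lemma am2 u v : 0 < u -> 0 < v -> u * v = 1 -> 2 <= u + v.
Proof. intros Hu Hv H. assert (E : u * (u + v - 2) = (u-1)*(u-1)) by nra.
  assert (0 <= u * (u + v - 2)) by (rewrite E; pose proof (Rle_0_sqr (u-1)); unfold Rsqr in *; lra).
  assert (0 <= u + v - 2). { destruct (Rle_or_lt 0 (u+v-2)) as [h|h]; auto.
   assert (u * (u+v-2) < 0) by (apply Rmult_pos_neg; lra). lra. } lra. Qed.

Definition harg t t' c := cosh t * cosh t' - sinh t * sinh t' * c.

Lemma harg_ge t t' c : 0 <= t -> 0 <= t' -> c <= 1 ->
  (exp t / exp t' + exp t' / exp t) / 2 <= harg t t' c.
Proof. intros. unfold harg. rewrite cosh_sinh_decomp.
  pose proof (sinh_nonneg t H). pose proof (sinh_nonneg t' H0).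
  assert (0 <= sinh t * sinh t') by nra. nra. Qed.

Lemma E1 t t' c : 0 <= t -> 0 <= t' -> c <= 1 ->
  t - t' - ln 2 <= acosh (harg t t' c).
Proof. intros H H0 H1. pose proof (harg_ge t t' c H H0 H1).
  pose proof (exp_pos t). pose proof (exp_pos t').
  assert (0 < exp t / exp t') by (apply Rdiv_lt_0_compat; lra).
  assert (0 < exp t' / exp t) by (apply Rdiv_lt_0_compat; lra).
  assert (Hq : exp t / exp t' * exp t' / exp t = 1) by (field; lra).
  assert (Hq1 : 1 <= harg t t' c).
  { assert (2 <= exp t / exp t' + exp t' / exp t).
    { set (u := exp t / exp t') in *. set (v := exp t' / exp t) in *.
      assert (u * v = 1) by (unfold u, v; field; lra). apply am2; auto. }
    lra. }
  eapply Rle_trans; [| apply acosh_ge_ln; exact Hq1].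
  assert (Ee : exp (t - t' - ln 2) = exp t / exp t' / 2).
  { unfold Rminus. rewrite !exp_plus, !exp_Ropp, exp_ln by lra. field; lra. }
  rewrite <- (ln_exp (t - t' - ln 2)). apply ln_le'. apply exp_pos.
  rewrite Ee. lra. Qed.

Lemma E1' t t' c : 0 <= t -> 0 <= t' -> c <= 1 ->
  t' - t - ln 2 <= acosh (harg t t' c).
Proof. intros. replace (harg t t' c) with (harg t' t c) by (unfold harg; ring).
  apply E1; auto. Qed.

Lemma sinh_lb t r : 0 < r < 1 -> 1 <= exp t * r -> exp t * (1 - r*r) / 2 <= sinh t.
Proof. intros Hr H. unfold sinh. rewrite exp_Ropp. pose proof (exp_pos t).
  assert (/ exp t <= exp t * r * r).
  { apply (Rmult_le_reg_l (exp t)). lra. rewrite Rinv_r by lra. nra. }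
  lra. Qed.

Lemma E2 t t' c r : 0 < r < 1 -> 0 <= t -> 0 <= t' -> 1 <= exp t * r -> 1 <= exp t' * r ->
  c < 1 ->
  t + t' + ln ((1 - r*r) * (1 - r*r) / 4 * (1 - c)) <= acosh (harg t t' c).
Proof. intros Hr Ht Ht' He He' Hc.
  pose proof (sinh_lb t r Hr He). pose proof (sinh_lb t' r Hr He').
  pose proof (exp_pos t). pose proof (exp_pos t').
  assert (Hrr : 0 < 1 - r*r) by nra.
  assert (Hg : exp t * (1 - r*r) / 2 * (exp t' * (1 - r*r) / 2) * (1 - c) <= harg t t' c).
  { unfold harg. rewrite cosh_sinh_decomp.
    assert (0 < exp t / exp t') by (apply Rdiv_lt_0_compat; lra).
    assert (0 < exp t' / exp t) by (apply Rdiv_lt_0_compat; lra).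
    assert (0 <= exp t * (1 - r*r) / 2) by (apply Rmult_le_pos; [apply Rmult_le_pos|]; lra).
    assert (exp t * (1 - r*r) / 2 * (exp t' * (1 - r*r) / 2) <= sinh t * sinh t').
    { apply Rmult_le_compat; try lra. apply Rmult_le_pos; [apply Rmult_le_pos|]; lra. }
    assert (exp t * (1 - r*r) / 2 * (exp t' * (1 - r*r) / 2) * (1 - c) <= sinh t * sinh t' * (1-c)).
    { apply Rmult_le_compat_r; lra. }
    lra. }
  assert (Hq1 : 1 <= harg t t' c).
  { pose proof (harg_ge t t' c Ht Ht' ltac:(lra)).
    assert (2 <= exp t / exp t' + exp t' / exp t).
    { assert (0 < exp t / exp t') by (apply Rdiv_lt_0_compat; lra).
      assert (0 < exp t' / exp t) by (apply Rdiv_lt_0_compat; lra).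
      set (u := exp t / exp t') in *. set (v := exp t' / exp t) in *.
      assert (u * v = 1) by (unfold u, v; field; lra). apply am2; auto. }
    lra. }
  eapply Rle_trans; [| apply acosh_ge_ln; exact Hq1].
  assert (HK : 0 < (1 - r*r) * (1 - r*r) / 4 * (1 - c)).
  { apply Rmult_lt_0_compat; [|lra]. apply Rmult_lt_0_compat; [nra|lra]. }
  assert (Ee : exp (t + t' + ln ((1 - r*r) * (1 - r*r) / 4 * (1 - c))) =
     exp t * (1 - r*r) / 2 * (exp t' * (1 - r*r) / 2) * (1 - c)).
  { rewrite !exp_plus, exp_ln by exact HK. field. }
  rewrite <- (ln_exp (t + t' + _)). apply ln_le'. apply exp_pos.
  rewrite Ee. exact Hg. Qed.

Lemma pow_decr r m j : 0 < r < 1 -> (m <= j)%nat -> r ^ j <= r ^ m.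
Proof. intros Hr H. replace j with (m + (j - m))%nat by lia. rewrite pow_add.
  assert (0 < r ^ m) by (apply pow_lt; lra).
  assert (r ^ (j - m) <= 1). { rewrite <- (pow1 (j-m)). apply pow_incr. lra. }
  assert (0 <= r ^ (j-m)) by (apply pow_le; lra). nra. Qed.

Lemma lnR r : 0 < r < 1 -> ln (1/r) = - ln r /\ 0 < ln (1/r).
Proof. intros Hr. assert (E : ln (1/r) = - ln r).
  { unfold Rdiv. rewrite Rmult_1_l. apply ln_Rinv. lra. }
  split; auto. rewrite E. assert (ln r < ln 1) by (apply ln_increasing; lra). rewrite ln_1 in H. lra. Qed.

Lemma exp_tj r j : 0 < r < 1 -> (1 <= j)%nat -> 1 <= exp (INR j * ln (1/r)) * r.
Proof. intros Hr Hj. assert (0 < 1/r) by (apply Rdiv_lt_0_compat; lra).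
  rewrite <- ln_pow by auto. rewrite exp_ln by (apply pow_lt; auto).
  assert (E : 1/r * r = 1) by (field; lra).
  assert (1 <= 1/r) by (apply (Rmult_le_reg_r r); lra).
  assert ((1/r)^1 <= (1/r)^j) by (apply Rle_pow; auto).
  simpl in H1. rewrite Rmult_1_r in H1. nra. Qed.

Definition sigA r gam lam D :=
  4 + (3 * ln 2 + 2 * Rabs (ln gam) + 2 * Rabs (ln (4 * (lam + 1))) +
       Rabs (ln ((1 - r*r) * (1 - r*r) / 4 * ((PI / D) * (PI / D)) / 18))) / ln (1/r).

Lemma div_helper a X Q R : 0 < R -> a * R <= X + Q -> a + 4 <= 1 / R * X + (4 + Q / R).
Proof. intros HR H. assert (a <= (X + Q) / R).
  { apply (Rmult_le_reg_r R); auto. unfold Rdiv. rewrite Rmult_assoc, Rinv_l by lra. lra. }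
  unfold Rdiv in *. lra. Qed.

Lemma final_A (r gam lam D rho : R) (j j' T N : nat) :
 0 < r < 1 -> 0 < gam < 1 -> 1 <= lam -> 0 < D -> 0 <= rho <= D -> (1 <= j)%nat -> (1 <= j')%nat ->
 gam * r ^ T <= (lam + 1) * (r ^ j + r ^ j') + rho ->
 INR N <= 4 + INR (j - T) + INR (j' - T) ->
 INR N <= (1 / ln (1/r)) * acosh (harg (INR j * ln (1/r)) (INR j' * ln (1/r)) (cos (PI / D * rho)))
   + sigA r gam lam D.
Proof.
  intros Hr Hg Hl HD Hrho Hj Hj' HT HN.
  destruct (lnR r Hr) as [ER HR].
  set (R := ln (1/r)) in *.
  set (t := INR j * R). set (t' := INR j' * R).
  set (c := cos (PI / D * rho)).
  set (X := acosh (harg t t' c)).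
  assert (Ht : 0 <= t) by (unfold t; apply Rmult_le_pos; [apply pos_INR|lra]).
  assert (Ht' : 0 <= t') by (unfold t'; apply Rmult_le_pos; [apply pos_INR|lra]).
  assert (Hc1 : c <= 1) by (unfold c; apply COS_bound).
  assert (HE1 : t - t' - ln 2 <= X) by (apply E1; auto).
  assert (HE1' : t' - t - ln 2 <= X) by (apply E1'; auto).
  assert (Hln2 : 0 < ln 2) by (pose proof ln_lt_2; lra).
  set (K0 := (1 - r*r) * (1 - r*r) / 4 * ((PI / D) * (PI / D)) / 18).
  set (Q := 3 * ln 2 + 2 * Rabs (ln gam) + 2 * Rabs (ln (4 * (lam + 1))) + Rabs (ln K0)).
  assert (HQ : ln 2 <= Q).
  { unfold Q. pose proof (Rabs_pos (ln gam)). pose proof (Rabs_pos (ln (4*(lam+1)))).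
    pose proof (Rabs_pos (ln K0)). lra. }
  change (INR N <= 1 / R * X + (4 + Q / R)).
  replace (INR N) with ((INR N - 4) + 4) by ring.
  apply div_helper; auto.
  assert (Habs : forall u, u <= Rabs u) by (intro u; apply Rle_abs).
  assert (Habs' : forall u, - u <= Rabs u) by (intro u; rewrite <- Rabs_Ropp; apply Rle_abs).
  destruct (le_lt_dec T j) as [HTj | HTj]; [destruct (le_lt_dec T j') as [HTj' | HTj'] |].
  -
    rewrite !minus_INR in HN by auto.
    set (Del := (lam + 1) * (r ^ j + r ^ j') + rho) in *.
    assert (Hpj : 0 < r ^ j) by (apply pow_lt; lra).
    assert (Hpj' : 0 < r ^ j') by (apply pow_lt; lra).
    assert (HDel : 0 < Del) by (unfold Del; nra).
    assert (HlnT : ln gam - INR T * R <= ln Del).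
    { assert (0 < r ^ T) by (apply pow_lt; lra).
      assert (ln (gam * r ^ T) <= ln Del) by (apply ln_le'; [apply Rmult_lt_0_compat; lra| auto]).
      rewrite ln_mult, ln_pow in H0 by lra. rewrite ER. lra. }
    assert (Hm : exists m, (m <= j)%nat /\ (m <= j')%nat /\ t + t' - 2 * (INR m * R) <= X + ln 2).
    { destruct (le_lt_dec j j') as [H1|H1].
      - exists j. split; [lia|split; [lia|]]. unfold t, t' in *. lra.
      - exists j'. split; [lia|split; [lia|]]. unfold t, t' in *. lra. }
    destruct Hm as [m [Hmj [Hmj' Hmx]]].
    assert (Hpm : 0 < r ^ m) by (apply pow_lt; lra).
    assert (Hrj : r ^ j <= r ^ m) by (apply pow_decr; auto).
    assert (Hrj' : r ^ j' <= r ^ m) by (apply pow_decr; auto).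
    destruct (Rle_or_lt rho (2 * (lam + 1) * r ^ m)) as [Hs|Hs].
    + assert (HD4 : Del <= 4 * (lam + 1) * r ^ m) by (unfold Del; nra).
      assert (HlnD : ln Del <= ln (4 * (lam + 1)) - INR m * R).
      { assert (ln Del <= ln (4 * (lam + 1) * r ^ m)) by (apply ln_le'; auto).
        rewrite ln_mult, ln_pow in H by (try apply pow_lt; lra). rewrite ER. lra. }
      assert ((INR N - 4) * R <= (INR j + INR j' - 2 * INR T) * R) by (apply Rmult_le_compat_r; lra).
      unfold t, t' in Hmx.
      pose proof (Habs' (ln gam)). pose proof (Habs (ln (4 * (lam + 1)))).
      pose proof (Rabs_pos (ln K0)). unfold Q. nra.
    + assert (HD2 : Del <= 2 * rho) by (unfold Del; nra).
      assert (Hrho0 : 0 < rho) by nra.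
      assert (HlnD : ln Del <= ln 2 + ln rho).
      { rewrite <- ln_mult by lra. apply ln_le'; lra. }
      set (th := PI / D * rho).
      assert (Hth0 : 0 < th) by (unfold th; pose proof PI_RGT_0; apply Rmult_lt_0_compat; [apply Rdiv_lt_0_compat|]; lra).
      assert (Hth1 : th <= PI).
      { unfold th. pose proof PI_RGT_0. replace PI with (PI / D * D) at 2 by (field; lra).
        apply Rmult_le_compat_l; [|lra]. left; apply Rdiv_lt_0_compat; lra. }
      pose proof (one_minus_cos th (ltac:(lra)) Hth1) as Hcos. assert (Hcc : cos th = c) by reflexivity. rewrite Hcc in Hcos.
      assert (Hc : c < 1) by nra.
      pose proof (E2 t t' c r Hr Ht Ht' (exp_tj r j Hr Hj) (exp_tj r j' Hr Hj') Hc) as HE2.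
      fold X in HE2.
      assert (Hrr : 0 < 1 - r * r) by nra.
      assert (HK0 : 0 < K0).
      { unfold K0. pose proof PI_RGT_0. assert (0 < PI / D) by (apply Rdiv_lt_0_compat; lra).
        apply Rdiv_lt_0_compat; [|lra]. apply Rmult_lt_0_compat; [|nra]. apply Rdiv_lt_0_compat; nra. }
      assert (HlnK : ln K0 + 2 * ln rho <= ln ((1 - r*r) * (1 - r*r) / 4 * (1 - c))).
      { replace (ln K0 + 2 * ln rho) with (ln (K0 * (rho * rho))).
        2:{ rewrite ln_mult by nra. rewrite ln_mult by lra. ring. }
        apply ln_le'. apply Rmult_lt_0_compat; [lra|apply Rmult_lt_0_compat; lra].
        unfold K0. assert (th * th / 18 = (PI / D) * (PI / D) * (rho * rho) / 18) by (unfold th; field; lra).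
        assert (0 < (1 - r*r) * (1 - r*r) / 4) by nra.
        replace ((1 - r * r) * (1 - r * r) / 4 * (PI / D * (PI / D)) / 18 * (rho * rho))
          with ((1 - r * r) * (1 - r * r) / 4 * (th * th / 18)) by (unfold th; field; lra).
        apply Rmult_le_compat_l; lra. }
      assert ((INR N - 4) * R <= (INR j + INR j' - 2 * INR T) * R) by (apply Rmult_le_compat_r; lra).
      unfold t, t' in HE2.
      pose proof (Habs' (ln gam)). pose proof (Habs (ln (4 * (lam + 1)))).
      pose proof (Habs' (ln K0)). pose proof (Rabs_pos (ln (4 * (lam + 1)))). unfold Q.
      replace ((INR j + INR j' - 2 * INR T) * R) with (INR j * R + INR j' * R - 2 * (INR T * R)) in H by ring.
      lra.
  -
    replace (j' - T)%nat with 0%nat in HN by lia. simpl INR in HN.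
    assert (INR (j - T) <= Rmax 0 (INR j - INR j')).
    { destruct (le_lt_dec j T). replace (j - T)%nat with 0%nat by lia. simpl. apply Rmax_l.
      rewrite minus_INR by lia. eapply Rle_trans; [|apply Rmax_r].
      assert (INR j' < INR T) by (apply lt_INR; lia). lra. }
    assert ((INR N - 4) * R <= Rmax 0 (INR j - INR j') * R) by (apply Rmult_le_compat_r; lra).
    unfold Rmax in H0. destruct (Rle_dec 0 (INR j - INR j')); unfold t, t' in *; nra.
  - replace (j - T)%nat with 0%nat in HN by lia. simpl INR in HN.
    assert (INR (j' - T) <= Rmax 0 (INR j' - INR j)).
    { destruct (le_lt_dec j' T). replace (j' - T)%nat with 0%nat by lia. simpl. apply Rmax_l.
      rewrite minus_INR by lia. eapply Rle_trans; [|apply Rmax_r].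
      assert (INR j < INR T) by (apply lt_INR; lia). lra. }
    assert ((INR N - 4) * R <= Rmax 0 (INR j' - INR j) * R) by (apply Rmult_le_compat_r; lra).
    unfold Rmax in H0. destruct (Rle_dec 0 (INR j' - INR j)); unfold t, t' in *; nra.
Qed.

Lemma final_B (r D rho : R) (j j' N C0 : nat) :
 0 < r < 1 ->
 (N <= C0 + (j - j') + (j' - j))%nat ->
 INR N <= (1 / ln (1/r)) * acosh (harg (INR j * ln (1/r)) (INR j' * ln (1/r)) (cos (PI / D * rho)))
   + (INR C0 + ln 2 / ln (1/r)).
Proof.
  intros Hr HN.
  destruct (lnR r Hr) as [ER HR].
  set (R := ln (1/r)) in *.
  set (X := acosh (harg (INR j * R) (INR j' * R) (cos (PI / D * rho)))).
  assert (Ht : 0 <= INR j * R) by (apply Rmult_le_pos; [apply pos_INR|lra]).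
  assert (Ht' : 0 <= INR j' * R) by (apply Rmult_le_pos; [apply pos_INR|lra]).
  assert (Hc1 : cos (PI / D * rho) <= 1) by apply COS_bound.
  assert (HE1 : INR j * R - INR j' * R - ln 2 <= X) by (apply E1; auto).
  assert (HE1' : INR j' * R - INR j * R - ln 2 <= X) by (apply E1'; auto).
  apply le_INR in HN. rewrite !plus_INR in HN.
  assert (Hd : (INR (j - j') + INR (j' - j)) * R <= X + ln 2).
  { destruct (le_lt_dec j j').
    - replace (j - j')%nat with 0%nat by lia. rewrite minus_INR by auto. simpl INR. lra.
    - replace (j' - j)%nat with 0%nat by lia. rewrite minus_INR by lia. simpl INR. lra. }
  assert (INR (j - j') + INR (j' - j) <= (X + ln 2) / R).
  { apply (Rmult_le_reg_r R); auto. unfold Rdiv. rewrite Rmult_assoc, Rinv_l by lra. lra. }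
  unfold Rdiv in *. lra.
Qed.

Lemma max_level (P : nat -> Prop) k m : (k <= m)%nat -> P k ->
  exists l, (k <= l <= m)%nat /\ P l /\ forall l', (l < l' <= m)%nat -> ~ P l'.
Proof.
  induction m as [|m IH]; intros Hkm Pk.
  - exists 0%nat. assert (k = 0%nat) by lia. subst. split; [lia|split; auto]. intros; lia.
  - destruct (classic (P (S m))) as [HP|HP].
    + exists (S m). split; [lia|split; auto]. intros; lia.
    + destruct (le_lt_dec k m) as [H|H].
      * destruct (IH H Pk) as [l [H1 [H2 H3]]]. exists l. split; [lia|split; auto].
        intros l' Hl'. destruct (Nat.eq_dec l' (S m)) as [->|Hne]; auto. apply H3; lia.
      * exists k. split; [lia|split; auto]. intros; lia.
Qed.

Lemma least_nat (P : nat -> Prop) : (exists n, P n) -> exists n, P n /\ forall m, P m -> (n <= m)%nat.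
Proof.
  intros [n Hn]. revert Hn. induction n as [n IH] using (well_founded_induction lt_wf). intro Hn.
  destruct (classic (exists m, (m < n)%nat /\ P m)) as [[m [Hm Pm]]|Hno].
  - apply (IH m Hm Pm).
  - exists n. split; auto. intros m Pm. destruct (le_lt_dec n m); auto. exfalso; apply Hno; eauto.
Qed.

Lemma le_eps x y : (forall e, 0 < e -> x < y + e) -> x <= y.
Proof. intro H. destruct (Rle_or_lt x y); auto. specialize (H ((x - y)/2) ltac:(lra)). lra. Qed.

Section TreeS.
Variables (Z : Type) (d : Z -> Z -> R) (A : Type) (cov : A -> nat -> (Z -> Prop) -> Prop)
  (r delta lam gamma : R) (a : A).
Hypothesis Hmet : is_metric Z d.
Hypothesis Hcs : characteristic_sequence Z d A cov r delta lam gamma.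
Hypothesis Hr : 0 < r < 1.
Hypothesis Hg : 0 < gamma.

Notation fam' := (fam Z A cov a).
Notation adj' := (adj Z A cov a).

Inductive wk : vertex Z -> vertex Z -> nat -> Prop :=
| wk0 v : wk v v 0
| wkS v u w n : adj' v u -> wk u w n -> wk v w (S n).

Lemma wk_tw v w n : wk v w n -> tree_walk Z A cov a v w n.
Proof. induction 1. - apply tw0. split; [reflexivity|intro; tauto].
  - eapply twS; eauto. Qed.

Lemma wk_app u v w n m : wk u v n -> wk v w m -> wk u w (n + m).
Proof. induction 1; intros; simpl; auto. eapply wkS; eauto. Qed.

Lemma wk_rev v w n : wk v w n -> wk w v n.
Proof. induction 1. - apply wk0.
  - replace (S n) with (n + 1)%nat by lia. eapply wk_app; eauto.
    eapply wkS; [|apply wk0]. match goal with H : adj' _ _ |- _ => unfold adj in *; destruct H as [H|H]; [right|left]; exact H end. Qed.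

Lemma adj_sym v w : adj' v w -> adj' w v.
Proof. unfold adj. tauto. Qed.

Lemma d_self z : d z z = 0.
Proof. destruct Hmet as [H _]. apply H. reflexivity. Qed.

Lemma nbhd_self s U z : 0 < s -> U z -> nbhd Z d s U z.
Proof. intros Hs Hz. exists z. split; auto. rewrite d_self. auto. Qed.

Lemma pos_s l : 0 < gamma * r ^ l.
Proof. apply Rmult_lt_0_compat; auto. apply pow_lt; lra. Qed.

Lemma fam_cov l U : (1 <= l)%nat -> fam' l U -> cov a l U.
Proof. destruct l; simpl; auto. lia. Qed.

Lemma cov_fam l U : (1 <= l)%nat -> cov a l U -> fam' l U.
Proof. destruct l; simpl; auto. lia. Qed.

Lemma samelev l U V : (1 <= l)%nat -> cov a l U -> cov a l V -> (exists z, U z /\ V z) -> same_set Z U V.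
Proof. intros. destruct Hcs as [Hcc _]. destruct (Hcc a l H) as [_ H3]. eauto. Qed.

Lemma contain l k C W : (k < l)%nat -> fam' l C -> fam' k W -> (exists b, C b /\ W b) -> subset Z C W.
Proof.
  intros Hkl HC HW [b [Cb Wb]]. destruct k as [|k].
  - simpl in HW. intros z _. apply HW.
  - apply fam_cov in HC; [|lia]. apply fam_cov in HW; [|lia].
    destruct (classic (same_set Z C W)) as [Hs|Hs].
    + intros z Hz. apply Hs; auto.
    + destruct Hcs as [_ [_ [_ [_ [H3 _]]]]].
      destruct (H3 a l (S k) C W ltac:(lia) ltac:(lia) HC HW Hs) as [Hd|Hsub].
      * exfalso. apply (Hd b). split; auto. apply nbhd_self; auto. apply pos_s.
      * intros z Hz. apply Hsub. apply nbhd_self; auto. apply pos_s.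
Qed.

Lemma up_walk : forall m B k W T, (k < m)%nat -> fam' m B -> (exists b, B b) -> fam' k W ->
  subset Z B W ->
  (forall l1 l2 C1 C2, (k < l2)%nat -> (l2 < l1)%nat -> (l1 < m)%nat -> fam' l1 C1 -> fam' l2 C2 ->
      subset Z B C1 -> subset Z B C2 -> (T <= l1)%nat) ->
  exists N, wk (m, B) (k, W) N /\ (N <= m - k)%nat /\ (N <= (m - T) + 2)%nat.
Proof.
  intro m. induction m as [m IH] using (well_founded_induction lt_wf).
  intros B k W T Hkm HB [b Bb] HW HBW HT.
  set (P := fun l => exists C, fam' l C /\ subset Z B C).
  destruct (max_level P k (m - 1) ltac:(lia) (ex_intro _ W (conj HW HBW))) as [l [Hl [[C [HC HBC]] Hmax]]].
  assert (Hnoint : forall k', (l < k')%nat -> (k' < m)%nat -> ~ exists W', fam' k' W' /\ subset Z B W').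
  { intros k' H1 H2. apply Hmax. lia. }
  destruct (Nat.eq_dec l k) as [->|Hlk].
  - exists 1%nat. split; [|lia]. eapply wkS; [|apply wk0]. left. simpl.
    repeat split; auto; lia.
  - assert (HCW : subset Z C W).
    { apply (contain l k); auto; try lia. exists b. split; auto. }
    assert (Hstep : adj' (m, B) (l, C)).
    { left. simpl. repeat split; auto; lia. }
    destruct (le_lt_dec T l) as [HTl|HTl].
    + destruct (IH l ltac:(lia) C k W T ltac:(lia) HC (ex_intro _ b (HBC b Bb)) HW HCW) as [N' [HN1 [HN2 HN3]]].
      { intros l1 l2 C1 C2 H1 H2 H3 H4 H5 H6 H7. apply (HT l1 l2 C1 C2); auto; try lia.
        - intros z Hz; auto.
        - intros z Hz; auto. }
      exists (S N'). split; [eapply wkS; eauto|lia].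
    + exists 2%nat. split; [|lia].
      eapply wkS; [exact Hstep|]. eapply wkS; [|apply wk0]. left. simpl.
      repeat split; auto; try lia.
      intros k' H1 H2 [W' [HW' HCW']].
      assert (T <= l)%nat; [|lia].
      apply (HT l k' C W'); auto; try lia. intros z Hz; auto.
Qed.

Lemma tri x y w : d x w <= d x y + d y w.
Proof. destruct Hmet as [_ [_ H]]. apply H. Qed.
Lemma dsym x y : d x y = d y x.
Proof. destruct Hmet as [_ [H _]]. apply H. Qed.
Lemma dpos x y : 0 <= d x y.
Proof. pose proof (tri x y x). rewrite d_self, (dsym y x) in H. lra. Qed.

Lemma diamU j U : (1 <= j)%nat -> cov a j U -> forall u v, U u -> U v -> d u v <= r ^ j.
Proof. intros. destruct Hcs as [_ [Hd1 _]]. apply (Hd1 j a U); auto. Qed.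

Variable choice : A -> nat -> Z -> (Z -> Prop).
Hypothesis Hch : forall a j z, (1 <= j)%nat -> cov a j (choice a j z) /\
     forall U, cov a j U -> dist_le_dist Z d z (choice a j z) U.

Lemma close j z : (1 <= j)%nat -> forall e, 0 < e -> exists u, choice a j z u /\ d z u < lam * r ^ j + e.
Proof. intros Hj e He. destruct Hcs as [_ [_ [_ [H2 _]]]].
  destruct (H2 a j z Hj) as [V [HV HdV]].
  destruct (HdV (e/2) ltac:(lra)) as [v [Vv Hv]].
  destruct (Hch a j z Hj) as [_ Hc]. destruct (Hc V HV v Vv (e/2) ltac:(lra)) as [u [Uu Hu]].
  exists u. split; auto. lra. Qed.

Section CaseA.
Hypothesis HA : forall l E, (1 <= l)%nat -> cov a l E -> exists z, E z.

Lemma margin l k C W : (1 <= k)%nat -> (k < l)%nat -> cov a l C -> cov a k W -> subset Z C W ->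
  (exists c, C c) -> subset Z (nbhd Z d (gamma * r ^ l) C) W.
Proof.
  intros Hk Hkl HC HW HCW [c Cc].
  destruct (classic (same_set Z C W)) as [Hs|Hs].
  - destruct Hcs as [_ [_ [_ [_ [_ H4]]]]].
    destruct (H4 a l k W Hk Hkl HW) as [U'' [HU'' Hsub]].
    destruct (HA l U'' ltac:(lia) HU'') as [u Uu].
    assert (HWu : W u) by (apply Hsub; apply nbhd_self; auto; apply pos_s).
    assert (Hss : same_set Z U'' C).
    { apply (samelev l); auto; try lia. exists u. split; auto. apply Hs; auto. }
    intros z [c' [Cc' Hd]]. apply Hsub. exists c'. split; auto. apply Hss; auto.
  - destruct Hcs as [_ [_ [_ [_ [H3 _]]]]].
    destruct (H3 a l k C W ltac:(lia) ltac:(lia) HC HW Hs) as [Hd|Hsub]; auto.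
    exfalso. apply (Hd c). split; [apply nbhd_self; auto; apply pos_s|auto].
Qed.

Lemma sideH z z' j j' U U' k T X : (1 <= j)%nat -> (1 <= j')%nat -> cov a j U -> cov a j' U' ->
  (exists u, U u) -> (exists u, U' u) ->
  (forall e, 0 < e -> exists u, U u /\ d z u < lam * r ^ j + e) ->
  (forall e, 0 < e -> exists u, U' u /\ d z' u < lam * r ^ j' + e) ->
  (k < j)%nat -> (k < j')%nat ->
  (forall l, (k < l)%nat -> (l <= j)%nat -> (l <= j')%nat ->
     ~ exists W, fam' l W /\ subset Z U W /\ subset Z U' W) ->
  lam * r ^ j + lam * r ^ j' + r ^ j' + d z z' <= X ->
  (forall l, gamma * r ^ l <= X -> (T <= l)%nat) ->
  forall l1 l2 C1 C2, (k < l2)%nat -> (l2 < l1)%nat -> (l1 < j)%nat -> fam' l1 C1 -> fam' l2 C2 ->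
      subset Z U C1 -> subset Z U C2 -> (T <= l1)%nat.
Proof.
  intros Hj Hj' HU HU' [u0 Uu0] [u0' Uu0'] Hcl Hcl' Hkj Hkj' Hmax HX HT
    l1 l2 C1 C2 H1 H2 H3 HC1 HC2 HUC1 HUC2.
  assert (HC12 : subset Z C1 C2).
  { apply (contain l1 l2); auto. exists u0; auto. }
  assert (HnU' : ~ subset Z U' C2).
  { intro Hs. destruct (le_lt_dec l2 j') as [Hle|Hlt].
    - apply (Hmax l2); try lia. exists C2. auto.
    - assert (HC2U' : subset Z C2 U').
      { apply (contain l2 j'); auto. apply cov_fam; auto. exists u0'. auto. }
      apply (Hmax j'); try lia. exists U'. split; [apply cov_fam; auto|split].
      + intros w Hw. auto.
      + intros w Hw; auto. }
  destruct (classic (exists y, U' y /\ ~ C2 y)) as [[y [Uy nCy]]|Hno].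
  2:{ exfalso. apply HnU'. intros w Hw. apply NNPP. intro Hn. apply Hno. eauto. }
  assert (Hmg : subset Z (nbhd Z d (gamma * r ^ l1) C1) C2).
  { apply (margin l1 l2); auto; try lia. apply fam_cov; auto; lia. apply fam_cov; auto; lia.
    exists u0; auto. }
  assert (Hfar : forall c, C1 c -> gamma * r ^ l1 <= d y c).
  { intros c Cc. destruct (Rle_or_lt (gamma * r ^ l1) (d y c)) as [h|h]; auto.
    exfalso. apply nCy. apply Hmg. exists c. auto. }
  apply HT. eapply Rle_trans; [|exact HX]. apply le_eps. intros e He.
  destruct (Hcl (e/2) ltac:(lra)) as [u [Uu Hu]].
  destruct (Hcl' (e/2) ltac:(lra)) as [u' [Uu' Hu']].
  pose proof (Hfar u (HUC1 u Uu)).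
  pose proof (diamU j' U' Hj' HU' y u' Uy Uu').
  pose proof (tri y u' u). pose proof (tri u' z' u). pose proof (tri z' z u).
  rewrite (dsym u' z') in *. rewrite (dsym z' z) in *.
  lra.
Qed.

Lemma nonempty_ch j z : (1 <= j)%nat -> exists u, choice a j z u.
Proof. intro Hj. destruct (close j z Hj 1 ltac:(lra)) as [u [Hu _]]. eauto. Qed.

Lemma mainA z z' j j' : (1 <= j)%nat -> (1 <= j')%nat ->
  exists N, tree_walk Z A cov a (j, choice a j z) (j', choice a j' z') N /\
   ((N <= (j - j') + (j' - j))%nat \/
    exists T, gamma * r ^ T <= (lam + 1) * (r ^ j + r ^ j') + d z z' /\
      (N <= ((j - T) + 2) + ((j' - T) + 2))%nat).
Proof.
  intros Hj Hj'.
  set (U := choice a j z). set (U' := choice a j' z').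
  assert (HU : cov a j U) by (apply Hch; auto).
  assert (HU' : cov a j' U') by (apply Hch; auto).
  assert (HUf : fam' j U) by (apply cov_fam; auto).
  assert (HUf' : fam' j' U') by (apply cov_fam; auto).
  destruct (nonempty_ch j z Hj) as [u0 Uu0]. destruct (nonempty_ch j' z' Hj') as [u0' Uu0'].
  fold U in Uu0. fold U' in Uu0'.
  set (Pc := fun l => exists W, fam' l W /\ subset Z U W /\ subset Z U' W).
  assert (P0 : Pc 0%nat).
  { exists (fun _ => True). split; [simpl; auto|split; intros w _; exact I]. }
  destruct (max_level Pc 0 (Nat.min j j') ltac:(lia) P0) as [k [Hk [[W [HW [HUW HU'W]]] Hmax]]].
  destruct (Nat.eq_dec k j) as [Ekj|Nkj].
  - subst k. assert (HWc : cov a j W) by (apply fam_cov; auto).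
    assert (HsU : same_set Z U W) by (apply (samelev j); auto; exists u0; auto).
    destruct (Nat.eq_dec j j') as [Ejj|Njj].
    + subst j'. exists 0%nat. split; [|left; lia].
      apply tw0. split; [reflexivity|].
      assert (HsU' : same_set Z U' W) by (apply (samelev j); auto; exists u0'; auto).
      intro w. rewrite (HsU w), (HsU' w). tauto.
    + assert (HU'U : subset Z U' U) by (intros w Hw; apply HsU; auto).
      destruct (up_walk j' U' j U 0 ltac:(lia) HUf' (ex_intro _ u0' Uu0') HUf HU'U) as [N [HN [HN1 _]]].
      { intros; lia. }
      exists N. split; [apply wk_tw, wk_rev; auto|left; lia].
  - destruct (Nat.eq_dec k j') as [Ekj'|Nkj'].
    + subst k. assert (HWc : cov a j' W) by (apply fam_cov; auto).
      assert (HsU' : same_set Z U' W) by (apply (samelev j'); auto; exists u0'; auto).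
      assert (HUU' : subset Z U U') by (intros w Hw; apply HsU'; auto).
      destruct (up_walk j U j' U' 0 ltac:(lia) HUf (ex_intro _ u0 Uu0) HUf' HUU') as [N [HN [HN1 _]]].
      { intros; lia. }
      exists N. split; [apply wk_tw; auto|left; lia].
    + set (Del := (lam + 1) * (r ^ j + r ^ j') + d z z').
      assert (Hpj : 0 < r ^ j) by (apply pow_lt; lra).
      assert (Hpj' : 0 < r ^ j') by (apply pow_lt; lra).
      pose proof (dpos z z').
      assert (Hlam : 0 < lam + 1).
      { destruct Hcs as [_ [_ [_ [H2 _]]]]. destruct (H2 a j z Hj) as [V [_ HV]].
        (* lam is only known through hypotheses; use nonneg from closeness *)
        destruct (HV 1 ltac:(lra)) as [v [_ Hv]]. pose proof (dpos z v).
        destruct (Rle_or_lt 0 lam); [lra|].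
        exfalso. destruct (HV (- lam * r ^ j) ltac:(nra)) as [v' [_ Hv']].
        pose proof (dpos z v'). nra. }
      assert (HDel : 0 < Del) by (unfold Del; nra).
      destruct (least_nat (fun l => gamma * r ^ l <= Del)) as [T [HT HTmin]].
      { destruct (pow_lt_1_zero r ltac:(rewrite Rabs_right; lra) (Del / gamma) ltac:(apply Rdiv_lt_0_compat; lra)) as [N0 HN0].
        exists N0. specialize (HN0 N0 (le_n _)). rewrite Rabs_right in HN0 by (left; apply pow_lt; lra).
        apply (Rmult_lt_compat_l gamma) in HN0; auto. unfold Rdiv in HN0.
        rewrite <- Rmult_assoc, (Rmult_comm gamma Del), Rmult_assoc, Rinv_r, Rmult_1_r in HN0 by lra. lra. }
      assert (Hmax1 : forall l, (k < l)%nat -> (l <= j)%nat -> (l <= j')%nat ->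
          ~ exists W, fam' l W /\ subset Z U W /\ subset Z U' W).
      { intros l H1 H2 H3. apply Hmax. lia. }
      assert (Hmax2 : forall l, (k < l)%nat -> (l <= j')%nat -> (l <= j)%nat ->
          ~ exists W, fam' l W /\ subset Z U' W /\ subset Z U W).
      { intros l H1 H2 H3 [W' [h1 [h2 h3]]]. apply (Hmax l); [lia|]. exists W'. auto. }
      assert (Hcl : forall e, 0 < e -> exists u, U u /\ d z u < lam * r ^ j + e) by (apply close; auto).
      assert (Hcl' : forall e, 0 < e -> exists u, U' u /\ d z' u < lam * r ^ j' + e) by (apply close; auto).
      assert (HX1 : lam * r ^ j + lam * r ^ j' + r ^ j' + d z z' <= Del) by (unfold Del; nra).
      assert (HX2 : lam * r ^ j' + lam * r ^ j + r ^ j + d z' z <= Del) by (unfold Del; rewrite dsym; nra).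
      destruct (up_walk j U k W T ltac:(lia) HUf (ex_intro _ u0 Uu0) HW HUW) as [N1 [HN1 [_ HN1b]]].
      { apply (sideH z z' j j' U U' k T Del); auto; try lia; eauto. }
      destruct (up_walk j' U' k W T ltac:(lia) HUf' (ex_intro _ u0' Uu0') HW HU'W) as [N2 [HN2 [_ HN2b]]].
      { apply (sideH z' z j' j U' U k T Del); auto; try lia; eauto. }
      exists (N1 + N2)%nat. split.
      * apply wk_tw. eapply wk_app; [exact HN1|apply wk_rev; exact HN2].
      * right. exists T. split; auto. lia.
Qed.

End CaseA.

Section CaseB.
Variables (L0 : nat) (E0 : Z -> Prop).
Hypothesis HL0 : (1 <= L0)%nat.
Hypothesis HE0 : cov a L0 E0.
Hypothesis HE0e : forall z, ~ E0 z.

Lemma ex_emp l : exists E, (L0 <= l)%nat -> cov a l E /\ forall z, ~ E z.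
Proof.
  destruct (le_lt_dec L0 l) as [H|H].
  - destruct (Nat.eq_dec l L0) as [->|Hne]. { exists E0. auto. }
    destruct Hcs as [_ [_ [_ [_ [_ H4]]]]].
    destruct (H4 a l L0 E0 HL0 ltac:(lia) HE0) as [U'' [HU'' Hsub]].
    exists U''. intros _. split; auto. intros z Hz. apply (HE0e z). apply Hsub. apply nbhd_self; auto. apply pos_s.
  - exists (fun _ => False). intros; lia.
Qed.

Definition Ef (l : nat) : Z -> Prop := proj1_sig (constructive_indefinite_description _ (ex_emp l)).
Lemma Ef_spec l : (L0 <= l)%nat -> cov a l (Ef l) /\ forall z, ~ Ef l z.
Proof. unfold Ef. destruct (constructive_indefinite_description _ (ex_emp l)). simpl. auto. Qed.

Lemma child_emp l V : (L0 <= S l)%nat -> fam' l V -> adj' (S l, Ef (S l)) (l, V).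
Proof. intros H HV. left. simpl. destruct (Ef_spec (S l) H) as [h1 h2].
  repeat split; auto. intros w Hw. exfalso; apply (h2 w Hw). intros; lia. Qed.

Lemma emp_chain n h : (L0 <= h)%nat -> wk ((h + n)%nat, Ef (h + n)%nat) (h, Ef h) n.
Proof. intro Hh. induction n as [|n IH].
  - rewrite Nat.add_0_r. apply wk0.
  - replace (h + S n)%nat with (S (h + n)) by lia. eapply wkS; [|exact IH].
    apply child_emp; [lia|]. apply cov_fam; [lia|]. apply Ef_spec; lia. Qed.

Lemma hub_hub h h' : (L0 <= h)%nat -> (L0 <= h')%nat -> wk (h, Ef h) (h', Ef h') ((h - h') + (h' - h))%nat.
Proof. intros H H'. destruct (le_lt_dec h h').
  - replace ((h - h') + (h' - h))%nat with (h' - h)%nat by lia. apply wk_rev.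
    pose proof (emp_chain (h' - h) h H). replace (h + (h' - h))%nat with h' in H0 by lia. auto.
  - replace ((h - h') + (h' - h))%nat with (h - h')%nat by lia.
    pose proof (emp_chain (h - h') h' H'). replace (h' + (h - h'))%nat with h in H0 by lia. auto. Qed.

Lemma down_step i V (z0 : Z) : fam' i V -> exists V', fam' (S i) V' /\ adj' (S i, V') (i, V).
Proof. intro HV. destruct i as [|i].
  - destruct Hcs as [_ [_ [_ [H2 _]]]]. destruct (H2 a 1%nat z0 (le_n _)) as [V' [HV' _]].
    exists V'. split; [exact HV'|]. left. simpl. repeat split; auto. intros w _. apply HV. intros; lia.
  - destruct Hcs as [_ [_ [_ [_ [_ H4]]]]].
    destruct (H4 a (S (S i)) (S i) V ltac:(lia) ltac:(lia) HV) as [U'' [HU'' Hsub]].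
    exists U''. split; [exact HU''|]. left. simpl. repeat split; auto.
    intros w Hw. apply Hsub. apply nbhd_self; auto. apply pos_s. intros; lia. Qed.

Lemma down_chain n : forall i V (z0 : Z), fam' i V -> exists V', fam' (i + n)%nat V' /\ wk (i, V) ((i + n)%nat, V') n.
Proof. induction n as [|n IH]; intros i V z0 HV.
  - exists V. rewrite Nat.add_0_r. split; auto. apply wk0.
  - destruct (down_step i V z0 HV) as [V1 [HV1 Ha]].
    destruct (IH (S i) V1 z0 HV1) as [V' [HV' Hw]].
    exists V'. replace (i + S n)%nat with (S i + n)%nat by lia. split; auto.
    eapply wkS; [|exact Hw]. unfold adj in *. destruct Ha; [right|left]; auto. Qed.

Lemma to_hub j U (z0 : Z) : fam' j U -> exists N, wk (j, U) (Nat.max j L0, Ef (Nat.max j L0)) N /\ (N <= L0 + 2)%nat.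
Proof. intro HU. destruct (le_lt_dec L0 j) as [H|H].
  - replace (Nat.max j L0) with j by lia. exists 2%nat. split; [|lia].
    apply (wkS _ (S j, Ef (S j))). { apply adj_sym. apply child_emp; auto. }
    eapply wkS; [|apply wk0]. apply child_emp; auto. apply cov_fam; [lia|]. apply Ef_spec; lia.
  - replace (Nat.max j L0) with L0 by lia.
    destruct (down_chain (L0 - 1 - j) j U z0 HU) as [V [HV Hw]].
    exists (S (L0 - 1 - j)). split; [|lia].
    replace (S (L0 - 1 - j)) with ((L0 - 1 - j) + 1)%nat by lia.
    eapply wk_app; [exact Hw|]. eapply wkS; [|apply wk0]. apply adj_sym.
    replace L0 with (S (j + (L0 - 1 - j))) at 1 by lia.
    replace (Ef L0) with (Ef (S (j + (L0 - 1 - j)))) by (f_equal; lia).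
    apply child_emp; auto. lia. Qed.

Lemma mainB j U j' U' (z0 : Z) : fam' j U -> fam' j' U' ->
  exists N, wk (j, U) (j', U') N /\ (N <= (2 * L0 + 4) + (j - j') + (j' - j))%nat.
Proof. intros HU HU'.
  destruct (to_hub j U z0 HU) as [N1 [W1 B1]].
  destruct (to_hub j' U' z0 HU') as [N2 [W2 B2]].
  pose proof (hub_hub (Nat.max j L0) (Nat.max j' L0) ltac:(lia) ltac:(lia)) as W3.
  exists (N1 + ((Nat.max j L0 - Nat.max j' L0) + (Nat.max j' L0 - Nat.max j L0)) + N2)%nat.
  split.
  - eapply wk_app; [eapply wk_app; [exact W1|exact W3]|apply wk_rev; exact W2].
  - lia. Qed.
End CaseB.

End TreeS.

Theorem proposition3p4
  (Z : Type) (d : Z -> Z -> R) (D : R)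
  (A : Type) (elts : list A) (n : nat)
  (delta gamma lam r : R)
  (cov : A -> nat -> (Z -> Prop) -> Prop)
  (choice : A -> nat -> Z -> (Z -> Prop)) :
  is_metric Z d -> bounded_metric Z d -> is_diam Z d D -> 0 < D ->
  NoDup elts -> (forall a, In a elts) -> length elts = S n ->
  0 < delta < 1 -> 0 < gamma < 1 -> 1 <= lam -> 0 < r < 1 ->
  lam * r < delta -> r < D ->
  characteristic_sequence Z d A cov r delta lam gamma ->
  (* choice a j z is a member of U_j^a closest to z *)
  (forall a j z, (1 <= j)%nat ->
     cov a j (choice a j z) /\
     forall U, cov a j U -> dist_le_dist Z d z (choice a j z) U) ->
  forall a : A,
    exists Lam sigma, 0 < Lam /\ 0 <= sigma /\
      forall (z : Z) (j : nat) (z' : Z) (j' : nat),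
        exists m, tree_walk Z A cov a (f_vertex choice a z j) (f_vertex choice a z' j') m /\
          INR m <= Lam * X_dist d D r z j z' j' + sigma.
Proof.
  intros Hmet Hbd Hdiam HD Hnd Hin Hlen Hdel Hgam Hlam Hr Hlr HrD Hcs Hch a.
  destruct (lnR r Hr) as [ER HR].
  assert (Hln2 : 0 < ln 2) by (pose proof ln_lt_2; lra).
  assert (HXd : forall z j z' j', X_dist d D r z j z' j' =
     acosh (harg (INR j * ln (1/r)) (INR j' * ln (1/r)) (cos (PI / D * d z z')))) by reflexivity.
  assert (Hg0 : 0 < gamma) by lra.
  assert (Hfv : forall z j, exists U, f_vertex choice a z j = (j, U) /\ fam Z A cov a j U).
  { intros z j. destruct j as [|j].
    - exists (fun _ => True). split; [reflexivity|]. simpl. auto.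
    - exists (choice a (S j) z). split; [reflexivity|]. simpl. apply Hch. lia. }
  assert (Hrho : forall z z', 0 <= d z z' <= D).
  { intros z z'. split.
    - destruct Hmet as [H1 [H2 H3]]. pose proof (H3 z z' z). rewrite (H2 z' z) in H.
      assert (d z z = 0) by (apply H1; auto). lra.
    - destruct Hdiam as [Hub _]. apply Hub. exists z, z'. reflexivity. }
  destruct (classic (exists l E, (1 <= l)%nat /\ cov a l E /\ forall z, ~ E z)) as [[L0 [E0 [HL0 [HE0 HE0e]]]]|HnB].
  -
    exists (1 / ln (1/r)), (INR (2 * L0 + 4) + ln 2 / ln (1/r)).
    split; [apply Rdiv_lt_0_compat; lra|].
    split. { pose proof (pos_INR (2 * L0 + 4)). assert (0 < ln 2 / ln (1/r)) by (apply Rdiv_lt_0_compat; lra). lra. }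
    intros z j z' j'.
    destruct (Hfv z j) as [U [EU HU]]. destruct (Hfv z' j') as [U' [EU' HU']].
    rewrite EU, EU'.
    destruct (mainB Z d A cov r delta lam gamma a Hmet Hcs Hr Hg0 L0 E0 HL0 HE0 HE0e j U j' U' z HU HU') as [N [HW HN]].
    exists N. split; [apply (wk_tw Z A cov r a Hr); eauto|].
    rewrite HXd. apply final_B; auto.
  -
    assert (HA : forall l E, (1 <= l)%nat -> cov a l E -> exists z, E z).
    { intros l E Hl HE. apply NNPP. intro Hn. apply HnB. exists l, E. split; auto. split; auto.
      intros z Hz. apply Hn. eauto. }
    exists (1 / ln (1/r)), (sigA r gamma lam D + (INR 0 + ln 2 / ln (1/r))).
    split; [apply Rdiv_lt_0_compat; lra|].
    assert (HsA : 0 <= sigA r gamma lam D).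
    { unfold sigA. assert (0 <= (3 * ln 2 + 2 * Rabs (ln gamma) + 2 * Rabs (ln (4 * (lam + 1))) +
       Rabs (ln ((1 - r*r) * (1 - r*r) / 4 * ((PI / D) * (PI / D)) / 18))) / ln (1/r)).
      { apply Rmult_le_pos; [|left; apply Rinv_0_lt_compat; lra].
        pose proof (Rabs_pos (ln gamma)). pose proof (Rabs_pos (ln (4 * (lam + 1)))).
        pose proof (Rabs_pos (ln ((1 - r*r) * (1 - r*r) / 4 * ((PI / D) * (PI / D)) / 18))). lra. }
      lra. }
    assert (Hs2 : 0 < ln 2 / ln (1/r)) by (apply Rdiv_lt_0_compat; lra).
    split. { simpl INR. lra. }
    intros z j z' j'.
    assert (HBb : forall N, (N <= 0 + (j - j') + (j' - j))%nat ->
        INR N <= 1 / ln (1/r) * X_dist d D r z j z' j' + (sigA r gamma lam D + (INR 0 + ln 2 / ln (1/r)))).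
    { intros N HN. rewrite HXd. pose proof (final_B r D (d z z') j j' N 0 Hr HN). lra. }
    destruct j as [|j]; destruct j' as [|j'].
    + exists 0%nat. split; [apply tw0; split; [reflexivity|intro; tauto]|]. apply HBb. lia.
    + destruct (up_walk Z d A cov r delta lam gamma a Hmet Hcs Hr Hg0 (S j') (choice a (S j') z') 0 (fun _ => True) 0)
        as [N [HW [HN _]]]; try lia.
      * simpl. apply Hch; lia.
      * destruct (close Z d A cov r delta lam gamma a Hcs choice Hch (S j') z' ltac:(lia) 1 ltac:(lra)) as [u [Hu _]]. eauto.
      * simpl. auto.
      * intros w _. exact I.
      * exists N. split; [apply (wk_tw Z A cov r a Hr); apply wk_rev; exact HW|]. apply HBb. lia.
    + destruct (up_walk Z d A cov r delta lam gamma a Hmet Hcs Hr Hg0 (S j) (choice a (S j) z) 0 (fun _ => True) 0)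
        as [N [HW [HN _]]]; try lia.
      * simpl. apply Hch; lia.
      * destruct (close Z d A cov r delta lam gamma a Hcs choice Hch (S j) z ltac:(lia) 1 ltac:(lra)) as [u [Hu _]]. eauto.
      * simpl. auto.
      * intros w _. exact I.
      * exists N. split; [apply (wk_tw Z A cov r a Hr); exact HW|]. apply HBb. lia.
    + destruct (mainA Z d A cov r delta lam gamma a Hmet Hcs Hr Hg0 choice Hch HA z z' (S j) (S j') ltac:(lia) ltac:(lia))
        as [N [HW [HN|[T [HT HN]]]]].
      * exists N. split; [exact HW|]. apply HBb. lia.
      * exists N. split; [exact HW|]. rewrite HXd.
        assert (INR N <= 4 + INR (S j - T) + INR (S j' - T)).
        { apply le_INR in HN. rewrite !plus_INR in HN. assert (E2 : INR 2 = 2) by (simpl; lra). rewrite E2 in HN. lra. }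
        pose proof (final_A r gamma lam D (d z z') (S j) (S j') T N Hr Hgam Hlam HD (Hrho z z') ltac:(lia) ltac:(lia) HT H).
        change (INR 0) with 0. lra.
Qed.
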